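(* Let $A, B$ be groups, $H\le A$, $K\le B$ subgroups, and $\phi: H\to K$ an isomorphism. The following are equivalent: (i) there exist an $H$-filtration of $A$ and a $K$-filtration of $B$ which are $(H, K, \phi)$-compatible; (ii) for any $a_1, \ldots, a_n\in A\setminus H$, $b_1, \ldots, b_m\in B\setminus K$, $h_1, \ldots, h_l\in H$ and $k_1, \ldots, k_s\in K$ there exist surjective homomorphisms $f^A: A \to G^A$, $f^B: B \to G^B$ onto finite groups such that $f^A(h) \mapsto f^B(\phi(h))$ ($h\in H$) is a well-defined isomorphism $f^A(H)\to f^B(K)$, and 1) $f^A(a_i)\notin f^A(H)$ for all $i=1, \ldots, n$; 2) $f^B(b_i)\notin f^B(K)$ for all $i=1, \ldots, m$; 3) $f^A(h_i)\neq f^A(h_j)$ whenever $h_i\ne h_j$, $1\le i,j\le l$; 4) $f^B(k_i)\neq f^B(k_j)$ whenever $k_i\ne k_j$, $1\le i,j\le s$.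
   Context: A filtration of a group $A$ is a family $\{A_\lambda\}_{\lambda\in\Lambda}$ of normal finite-index subgroups with $\bigcap A_\lambda=\{e\}$; it is an $H$-filtration if $\bigcap_\lambda HA_\lambda=H$. An $H$-filtration $\{A_\lambda\}$ of $A$ and a $K$-filtration $\{B_\lambda\}$ of $B$ with the same index set are $(H,K,\phi)$-compatible if for each $\lambda$ the map $hA_\lambda\mapsto\phi(h)B_\lambda$ is well defined and an isomorphism $HA_\lambda/A_\lambda\to KB_\lambda/B_\lambda$. *)

(* Defs.v *)
From Stdlib Require Import List.

Record group := Group {
  carrier :> Type;
  gmul : carrier -> carrier -> carrier;
  ginv : carrier -> carrier;
  gone : carrier;
  gmulA : forall x y z, gmul x (gmul y z) = gmul (gmul x y) z;
  gmul1l : forall x, gmul gone x = x;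
  gmulVl : forall x, gmul (ginv x) x = gone
}.

Arguments gmul {g}.
Arguments ginv {g}.
Arguments gone {g}.

Definition subgroup {G : group} (H : G -> Prop) : Prop :=
  H gone /\ (forall x y, H x -> H y -> H (gmul x y)) /\ (forall x, H x -> H (ginv x)).

Definition normal_subgroup {G : group} (N : G -> Prop) : Prop :=
  subgroup N /\ forall g n, N n -> N (gmul (gmul g n) (ginv g)).

Definition finite_index {G : group} (N : G -> Prop) : Prop :=
  exists reps : list G, forall a : G, exists r, In r reps /\ N (gmul (ginv r) a).

Definition finite_group (G : group) : Prop :=
  exists s : list G, forall x : G, In x s.

Definition group_hom {G G' : group} (f : G -> G') : Prop :=
  forall x y, f (gmul x y) = gmul (f x) (f y).

(* phi : H -> K is an isomorphism (phi given as a map A -> B, only its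
   values on H matter) *)
Definition subgroup_iso {A B : group} (H : A -> Prop) (K : B -> Prop)
  (phi : A -> B) : Prop :=
  (forall h, H h -> K (phi h)) /\
  (forall h h', H h -> H h' -> phi (gmul h h') = gmul (phi h) (phi h')) /\
  (forall h h', H h -> H h' -> phi h = phi h' -> h = h') /\
  (forall k, K k -> exists h, H h /\ phi h = k).

Definition filtration {A : group} {Lam : Type} (N : Lam -> A -> Prop) : Prop :=
  (forall l, normal_subgroup (N l) /\ finite_index (N l)) /\
  (forall a, (forall l, N l a) -> a = gone).

Definition in_prod {A : group} (H N : A -> Prop) (a : A) : Prop :=
  exists h n, H h /\ N n /\ a = gmul h n.

Definition H_filtration {A : group} (H : A -> Prop) {Lam : Type}
  (N : Lam -> A -> Prop) : Prop :=
  filtration N /\ (forall a, (forall l, in_prod H (N l) a) <-> H a).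

Definition same_coset {A : group} (N : A -> Prop) (x y : A) : Prop :=
  N (gmul (ginv x) y).

(* (H,K,phi)-compatibility: for each l, the map h A_l |-> phi(h) B_l is
   well defined and is an isomorphism H A_l / A_l -> K B_l / B_l. *)
Definition compatible {A B : group} (H : A -> Prop) (K : B -> Prop)
  (phi : A -> B) {Lam : Type} (NA : Lam -> A -> Prop) (NB : Lam -> B -> Prop)
  : Prop :=
  forall l,
    (forall h h', H h -> H h' -> same_coset (NA l) h h' ->
        same_coset (NB l) (phi h) (phi h')) /\
    (forall h h', H h -> H h' ->
        same_coset (NB l) (phi (gmul h h')) (gmul (phi h) (phi h'))) /\
    (forall h h', H h -> H h' -> same_coset (NB l) (phi h) (phi h') ->
        same_coset (NA l) h h') /\
    (forall k, K k -> exists h, H h /\ same_coset (NB l) (phi h) k).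

(* Main.v *)
Require Import Defs.
From Stdlib Require Import List Classical ClassicalEpsilon FunctionalExtensionality PropExtensionality ProofIrrelevance.

Lemma mulA' (G : group) (x y z : G) : gmul (gmul x y) z = gmul x (gmul y z).
Proof. symmetry; apply gmulA. Qed.
Lemma mulKl (G : group) (x y : G) : gmul (ginv x) (gmul x y) = y.
Proof. rewrite gmulA, gmulVl, gmul1l. reflexivity. Qed.
Lemma mulVr (G : group) (x : G) : gmul x (ginv x) = gone.
Proof.
  assert (ee : gmul (gmul x (ginv x)) (gmul x (ginv x)) = gmul x (ginv x)).
  { rewrite mulA', mulKl. reflexivity. }
  assert (E := mulKl G (gmul x (ginv x)) (gmul x (ginv x))).
  rewrite ee, gmulVl in E. symmetry; exact E.
Qed.
Lemma mul1r (G : group) (x : G) : gmul x gone = x.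
Proof. rewrite <- (gmulVl G x), gmulA, mulVr, gmul1l. reflexivity. Qed.
Lemma mulKr (G : group) (x y : G) : gmul x (gmul (ginv x) y) = y.
Proof. rewrite gmulA, mulVr, gmul1l. reflexivity. Qed.
Lemma inv_uniq (G : group) (u v : G) : gmul u v = gone -> u = ginv v.
Proof. intro E. rewrite <- (mul1r G u), <- (mulVr G v), gmulA, E, gmul1l. reflexivity. Qed.
Lemma invinv (G : group) (x : G) : ginv (ginv x) = x.
Proof. symmetry. apply inv_uniq. apply mulVr. Qed.
Lemma invmul (G : group) (x y : G) : ginv (gmul x y) = gmul (ginv y) (ginv x).
Proof. symmetry. apply inv_uniq. rewrite mulA', mulKl, gmulVl. reflexivity. Qed.
Lemma inv1 (G : group) : ginv (@gone G) = gone.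
Proof. symmetry. apply inv_uniq. apply gmul1l. Qed.

Global Hint Rewrite mulA' gmul1l mul1r gmulVl mulVr mulKl mulKr invinv invmul inv1 : grp.

Lemma sc_refl {A : group} (N : A -> Prop) (HN : subgroup N) x : same_coset N x x.
Proof. unfold same_coset. rewrite gmulVl. apply HN. Qed.
Lemma sc_sym {A : group} (N : A -> Prop) (HN : subgroup N) x y :
  same_coset N x y -> same_coset N y x.
Proof. unfold same_coset. intro h.
  replace (gmul (ginv y) x) with (ginv (gmul (ginv x) y)) by (autorewrite with grp; reflexivity).
  apply HN; exact h. Qed.
Lemma sc_trans {A : group} (N : A -> Prop) (HN : subgroup N) x y z :
  same_coset N x y -> same_coset N y z -> same_coset N x z.
Proof. unfold same_coset. intros h1 h2.
  replace (gmul (ginv x) z) with (gmul (gmul (ginv x) y) (gmul (ginv y) z)) by (autorewrite with grp; reflexivity).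
  apply HN; assumption. Qed.
Lemma sc_mul {A : group} (N : A -> Prop) (HN : normal_subgroup N) x x' y y' :
  same_coset N x x' -> same_coset N y y' -> same_coset N (gmul x y) (gmul x' y').
Proof. unfold same_coset. intros h1 h2.
  replace (gmul (ginv (gmul x y)) (gmul x' y')) with
    (gmul (gmul (gmul (ginv y) (gmul (ginv x) x')) (ginv (ginv y))) (gmul (ginv y) y'))
    by (autorewrite with grp; reflexivity).
  destruct HN as [HS HN]. apply HS; auto. Qed.

Definition cr {A : group} (N : A -> Prop) (a : A) : A :=
  epsilon (inhabits (@gone A)) (fun b => same_coset N a b).
Lemma cr_spec {A : group} (N : A -> Prop) (HN : subgroup N) a : same_coset N a (cr N a).
Proof. unfold cr. apply (epsilon_spec (inhabits gone) (fun b => same_coset N a b)).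
  exists a. apply sc_refl; auto. Qed.
Lemma cr_eq {A : group} (N : A -> Prop) (HN : subgroup N) a b :
  same_coset N a b -> cr N a = cr N b.
Proof. intro h. unfold cr. f_equal. apply functional_extensionality. intro c.
  apply propositional_extensionality. split; intro h'.
  - apply sc_trans with a; auto. apply sc_sym; auto.
  - apply sc_trans with b; auto. Qed.
Lemma cr_idem {A : group} (N : A -> Prop) (HN : subgroup N) a : cr N (cr N a) = cr N a.
Proof. apply cr_eq; auto. apply sc_sym; auto. apply cr_spec; auto. Qed.

Definition qc {A : group} (N : A -> Prop) : Type := {a : A | cr N a = a}.
Definition qpi {A : group} (N : A -> Prop) (HN : normal_subgroup N) (a : A) : qc N :=
  exist _ (cr N a) (cr_idem N (proj1 HN) a).
Lemma sig_eq {T : Type} (P : T -> Prop) (x y : {a : T | P a}) : proj1_sig x = proj1_sig y -> x = y.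
Proof. destruct x as [x px], y as [y py]; simpl; intro e; subst; f_equal; apply proof_irrelevance. Qed.
Lemma qeq {A : group} (N : A -> Prop) (HN : normal_subgroup N) a b :
  qpi N HN a = qpi N HN b <-> same_coset N a b.
Proof. split; intro h.
  - assert (e : cr N a = cr N b) by (exact (f_equal (@proj1_sig _ _) h)).
    apply sc_trans with (cr N a). apply HN. apply cr_spec, HN.
    rewrite e. apply sc_sym. apply HN. apply cr_spec, HN.
  - apply sig_eq. simpl. apply cr_eq; auto. apply HN. Qed.
Lemma qpi_val {A : group} (N : A -> Prop) (HN : normal_subgroup N) (x : qc N) :
  qpi N HN (proj1_sig x) = x.
Proof. apply sig_eq. destruct x; simpl. exact e. Qed.
Lemma q_ind {A : group} (N : A -> Prop) (HN : normal_subgroup N) (P : qc N -> Prop) :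
  (forall a, P (qpi N HN a)) -> forall x, P x.
Proof. intros h x. rewrite <- (qpi_val N HN x). apply h. Qed.

Definition qmul {A : group} (N : A -> Prop) (HN : normal_subgroup N) (x y : qc N) : qc N :=
  qpi N HN (gmul (proj1_sig x) (proj1_sig y)).
Definition qinv {A : group} (N : A -> Prop) (HN : normal_subgroup N) (x : qc N) : qc N :=
  qpi N HN (ginv (proj1_sig x)).
Definition qone {A : group} (N : A -> Prop) (HN : normal_subgroup N) : qc N := qpi N HN gone.

Lemma qpi_mul {A : group} (N : A -> Prop) (HN : normal_subgroup N) a b :
  qmul N HN (qpi N HN a) (qpi N HN b) = qpi N HN (gmul a b).
Proof. unfold qmul. apply qeq. simpl. apply sc_mul; auto.
  - apply sc_sym. apply HN. apply cr_spec, HN.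
  - apply sc_sym. apply HN. apply cr_spec, HN. Qed.

Lemma qmulA {A : group} (N : A -> Prop) (HN : normal_subgroup N) (x y z : qc N) :
  qmul N HN x (qmul N HN y z) = qmul N HN (qmul N HN x y) z.
Proof. rewrite <- (qpi_val N HN x), <- (qpi_val N HN y), <- (qpi_val N HN z).
  rewrite !qpi_mul, gmulA. reflexivity. Qed.
Lemma qmul1l {A : group} (N : A -> Prop) (HN : normal_subgroup N) (x : qc N) :
  qmul N HN (qone N HN) x = x.
Proof. rewrite <- (qpi_val N HN x). unfold qone. rewrite qpi_mul, gmul1l. reflexivity. Qed.
Lemma qmulVl {A : group} (N : A -> Prop) (HN : normal_subgroup N) (x : qc N) :
  qmul N HN (qinv N HN x) x = qone N HN.
Proof. unfold qinv. rewrite <- (qpi_val N HN x) at 2. rewrite qpi_mul, gmulVl. reflexivity. Qed.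

Definition quot {A : group} (N : A -> Prop) (HN : normal_subgroup N) : group :=
  Group (qc N) (qmul N HN) (qinv N HN) (qone N HN) (qmulA N HN) (qmul1l N HN) (qmulVl N HN).

Lemma qpi_hom {A : group} (N : A -> Prop) (HN : normal_subgroup N) :
  @group_hom A (quot N HN) (qpi N HN).
Proof. intros x y. simpl. rewrite qpi_mul. reflexivity. Qed.
Lemma qpi_surj {A : group} (N : A -> Prop) (HN : normal_subgroup N) :
  forall y : quot N HN, exists a, qpi N HN a = y.
Proof. intro y. exists (proj1_sig y). apply qpi_val. Qed.
Lemma quot_finite {A : group} (N : A -> Prop) (HN : normal_subgroup N) :
  finite_index N -> finite_group (quot N HN).
Proof. intros [reps Hr]. exists (map (qpi N HN) reps). intro x. simpl in x.
  destruct (Hr (proj1_sig x)) as [r [Hin Hrx]].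
  rewrite <- (qpi_val N HN x). replace (qpi N HN (proj1_sig x)) with (qpi N HN r).
  apply in_map; auto. apply qeq. exact Hrx. Qed.

Definition interN {A : group} {Lam : Type} (N : Lam -> A -> Prop) (ls : list Lam) (a : A) : Prop :=
  forall l, In l ls -> N l a.

Lemma inter_normal {A : group} {Lam : Type} (N : Lam -> A -> Prop) ls :
  (forall l, normal_subgroup (N l)) -> normal_subgroup (interN N ls).
Proof. intro h. unfold interN. split; [split; [|split]|].
  - intros l _. apply h.
  - intros x y hx hy l hl. apply h; auto.
  - intros x hx l hl. apply h; auto.
  - intros g n hn l hl. apply h; auto. Qed.

Lemma fi_ext {A : group} (N N' : A -> Prop) : (forall a, N a <-> N' a) -> finite_index N -> finite_index N'.
Proof. intros e [reps h]. exists reps. intro a. destruct (h a) as [r [hr hr']]. exists r. split; auto. apply e; auto. Qed.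

Lemma fi_pair {A : group} (N1 N2 : A -> Prop) : subgroup N1 -> subgroup N2 ->
  finite_index N1 -> finite_index N2 -> finite_index (fun a => N1 a /\ N2 a).
Proof. intros s1 s2 [R1 h1] [R2 h2].
  pose (c := fun p : A * A => epsilon (inhabits (@gone A))
     (fun c => same_coset N1 (fst p) c /\ same_coset N2 (snd p) c)).
  exists (map c (list_prod R1 R2)). intro a.
  destruct (h1 a) as [r [hr ra]]. destruct (h2 a) as [s [hs sa]].
  exists (c (r, s)). split.
  - apply in_map. apply in_prod; auto.
  - assert (sp : same_coset N1 r (c (r,s)) /\ same_coset N2 s (c (r,s))).
    { unfold c. apply (epsilon_spec (inhabits gone) (fun c => same_coset N1 (fst (r,s)) c /\ same_coset N2 (snd (r,s)) c)).
      exists a. split; assumption. }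
    destruct sp as [sp1 sp2]. split.
    + apply (sc_trans N1 s1 _ r). apply sc_sym; auto. exact ra.
    + apply (sc_trans N2 s2 _ s). apply sc_sym; auto. exact sa. Qed.

Lemma inter_fi {A : group} {Lam : Type} (N : Lam -> A -> Prop) ls :
  (forall l, subgroup (N l) /\ finite_index (N l)) -> finite_index (interN N ls).
Proof. intro h. induction ls as [|l ls IH].
  - exists (gone :: nil). intro a. exists gone. split. left; reflexivity. intros l [].
  - apply fi_ext with (fun a => N l a /\ interN N ls a).
    + intro a. unfold interN. split.
      * intros [h1 h2] l' [<-|hl']; auto.
      * intro h'. split. apply h'; left; auto. intros l' hl'. apply h'; right; auto.
    + apply fi_pair; auto; try apply h.
      unfold interN. split; [|split].
      * intros l' _. apply h.
      * intros x y hx hy l' hl. apply h; auto.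
      * intros x hx l' hl. apply h; auto. Qed.

Lemma hom1 {G G' : group} (f : G -> G') : group_hom f -> f gone = gone.
Proof. intro hf. assert (e : f gone = gmul (f gone) (f gone)) by (rewrite <- hf, gmul1l; reflexivity).
  assert (E := mulKl G' (f gone) (f gone)). rewrite <- e, gmulVl in E. symmetry; exact E. Qed.
Lemma homV {G G' : group} (f : G -> G') : group_hom f -> forall x, f (ginv x) = ginv (f x).
Proof. intros hf x. apply inv_uniq. rewrite <- hf, gmulVl. apply hom1; auto. Qed.
Lemma ker_sc {G G' : group} (f : G -> G') : group_hom f -> forall x y,
  f (gmul (ginv x) y) = gone <-> f x = f y.
Proof. intros hf x y. rewrite hf, homV; auto. split; intro e.
  - rewrite <- (mulKr G' (f x) (f y)), e, mul1r. reflexivity.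
  - rewrite e, gmulVl. reflexivity. Qed.
Lemma ker_normal {G G' : group} (f : G -> G') : group_hom f -> normal_subgroup (fun a => f a = gone).
Proof. intro hf. split; [split; [|split]|].
  - apply hom1; auto.
  - intros x y hx hy. rewrite hf, hx, hy, gmul1l. reflexivity.
  - intros x hx. rewrite homV, hx, inv1; auto.
  - intros g n hn. rewrite !hf, hn, mul1r, homV, mulVr; auto. Qed.
Lemma ker_fi {G G' : group} (f : G -> G') : group_hom f -> finite_group G' ->
  (forall y, exists a, f a = y) -> finite_index (fun a => f a = gone).
Proof. intros hf [s hs] sur.
  pose (ch := fun y => epsilon (inhabits (@gone G)) (fun a => f a = y)).
  assert (chs : forall y, f (ch y) = y).
  { intro y. unfold ch. apply (epsilon_spec (inhabits gone) (fun a => f a = y)). apply sur. }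
  exists (map ch s). intro a. exists (ch (f a)). split.
  - apply in_map; auto.
  - apply ker_sc; auto. Qed.

Definition ext_psi {A : group} {GA GB : Type} (P : A -> Prop) (fA : A -> GA) (g : A -> GB)
  (d : GB) (y : GA) : GB :=
  match excluded_middle_informative (exists h, P h /\ fA h = y) with
  | left p => g (proj1_sig (constructive_indefinite_description _ p))
  | right _ => d
  end.
Lemma ext_psi_spec {A : group} {GA GB : Type} (P : A -> Prop) (fA : A -> GA) (g : A -> GB) d :
  (forall h h', P h -> P h' -> fA h = fA h' -> g h = g h') ->
  forall h, P h -> ext_psi P fA g d (fA h) = g h.
Proof. intros wd h hh. unfold ext_psi.
  destruct (excluded_middle_informative _) as [p|n].
  - destruct (constructive_indefinite_description _ p) as [h0 [h0P e]]. simpl. apply wd; auto.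
  - exfalso. apply n. exists h; auto. Qed.

Lemma collect {X Lam : Type} (Q : X -> Prop) (P : X -> Lam -> Prop) (xs : list X) :
  (forall x, In x xs -> Q x -> exists l, P x l) ->
  exists ls, forall x, In x xs -> Q x -> exists l, In l ls /\ P x l.
Proof. induction xs as [|x xs IH]; intro h.
  - exists nil. intros x [].
  - destruct IH as [ls hls]. { intros; apply h; auto. right; auto. }
    destruct (classic (Q x)) as [qx|nqx].
    + destruct (h x (or_introl eq_refl) qx) as [l hl]. exists (l :: ls).
      intros y [<-|hy] qy. exists l; split; auto. left; auto.
      destruct (hls y hy qy) as [l' [h1 h2]]. exists l'; split; auto. right; auto.
    + exists ls. intros y [<-|hy] qy. contradiction. auto. Qed.

Lemma dir1 (A B : group) (H : A -> Prop) (K : B -> Prop)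
  (phi : A -> B) (HH : subgroup H) (HK : subgroup K)
  (Hphi : subgroup_iso H K phi) (Lam : Type) (NA : Lam -> A -> Prop) (NB : Lam -> B -> Prop) :
  H_filtration H NA -> H_filtration K NB -> compatible H K phi NA NB ->
  (forall (as_ : list A) (bs : list B) (hs : list A) (ks : list B),
     (forall a, In a as_ -> ~ H a) ->
     (forall b, In b bs -> ~ K b) ->
     (forall h, In h hs -> H h) ->
     (forall k, In k ks -> K k) ->
     exists (GA GB : group) (fA : A -> GA) (fB : B -> GB) (psi : GA -> GB),
       finite_group GA /\ finite_group GB /\
       group_hom fA /\ (forall y : GA, exists a, fA a = y) /\
       group_hom fB /\ (forall y : GB, exists b, fB b = y) /\
       (forall h, H h -> psi (fA h) = fB (phi h)) /\
       (forall h h', H h -> H h' ->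
          psi (gmul (fA h) (fA h')) = gmul (psi (fA h)) (psi (fA h'))) /\
       (forall h h', H h -> H h' -> psi (fA h) = psi (fA h') -> fA h = fA h') /\
       (forall k, K k -> exists h, H h /\ psi (fA h) = fB k) /\
       (forall a, In a as_ -> forall h, H h -> fA a <> fA h) /\
       (forall b, In b bs -> forall k, K k -> fB b <> fB k) /\
       (forall h h', In h hs -> In h' hs -> h <> h' -> fA h <> fA h') /\
       (forall k k', In k ks -> In k' ks -> k <> k' -> fB k <> fB k')).
Proof.
  intros [[FA1 FA2] FA3] [[FB1 FB2] FB3] C as_ bs hs ks ha hb hh hk.
  destruct (collect (fun _ => True) (fun a l => ~ Defs.in_prod H (NA l) a) as_) as [ls1 L1].
  { intros a ia _. apply NNPP. intro n. apply (ha a ia). apply FA3. intro l.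
    apply NNPP. intro m. apply n. exists l. exact m. }
  destruct (collect (fun _ => True) (fun b l => ~ Defs.in_prod K (NB l) b) bs) as [ls2 L2].
  { intros b ib _. apply NNPP. intro n. apply (hb b ib). apply FB3. intro l.
    apply NNPP. intro m. apply n. exists l. exact m. }
  destruct (collect (fun p => fst p <> snd p) (fun p l => ~ NA l (gmul (ginv (fst p)) (snd p)))
              (list_prod hs hs)) as [ls3 L3].
  { intros p ip np. apply NNPP. intro n. apply np.
    assert (e : gmul (ginv (fst p)) (snd p) = gone).
    { apply FA2. intro l. apply NNPP. intro m. apply n. exists l. exact m. }
    rewrite <- (mulKr A (fst p) (snd p)), e, mul1r. reflexivity. }
  destruct (collect (fun p => fst p <> snd p) (fun p l => ~ NB l (gmul (ginv (fst p)) (snd p)))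
              (list_prod ks ks)) as [ls4 L4].
  { intros p ip np. apply NNPP. intro n. apply np.
    assert (e : gmul (ginv (fst p)) (snd p) = gone).
    { apply FB2. intro l. apply NNPP. intro m. apply n. exists l. exact m. }
    rewrite <- (mulKr B (fst p) (snd p)), e, mul1r. reflexivity. }
  pose (ls := ls1 ++ ls2 ++ ls3 ++ ls4).
  assert (i1 : forall l, In l ls1 -> In l ls) by (intros; unfold ls; rewrite !in_app_iff; tauto).
  assert (i2 : forall l, In l ls2 -> In l ls) by (intros; unfold ls; rewrite !in_app_iff; tauto).
  assert (i3 : forall l, In l ls3 -> In l ls) by (intros; unfold ls; rewrite !in_app_iff; tauto).
  assert (i4 : forall l, In l ls4 -> In l ls) by (intros; unfold ls; rewrite !in_app_iff; tauto).
  pose (HNA := inter_normal NA ls (fun l => proj1 (FA1 l))).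
  pose (HNB := inter_normal NB ls (fun l => proj1 (FB1 l))).
  assert (sA : forall l, subgroup (NA l)) by (intro l; apply (FA1 l)).
  assert (sB : forall l, subgroup (NB l)) by (intro l; apply (FB1 l)).
  assert (wd : forall h h', H h -> H h' -> qpi _ HNA h = qpi _ HNA h' ->
                 qpi _ HNB (phi h) = qpi _ HNB (phi h')).
  { intros h h' Hh Hh' e. apply qeq. apply qeq in e. intros l hl.
    apply (proj1 (C l)); auto. apply e; auto. }
  pose (psi := ext_psi H (qpi _ HNA) (fun h => qpi _ HNB (phi h)) (@gone (quot _ HNB))).
  assert (ps : forall h, H h -> psi (qpi _ HNA h) = qpi _ HNB (phi h)).
  { intros. apply (ext_psi_spec H (qpi _ HNA) (fun h => qpi _ HNB (phi h))); auto. }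
  destruct Hphi as [P1 [P2 [P3 P4]]].
  exists (quot _ HNA), (quot _ HNB), (qpi _ HNA), (qpi _ HNB), psi.
  split; [|split; [|split; [|split; [|split; [|split; [|split; [|split; [|split;
    [|split; [|split; [|split; [|split]]]]]]]]]]]].
  - apply quot_finite. apply inter_fi. intro l; split; [apply sA|apply FA1].
  - apply quot_finite. apply inter_fi. intro l; split; [apply sB|apply FB1].
  - apply qpi_hom.
  - apply qpi_surj.
  - apply qpi_hom.
  - apply qpi_surj.
  - exact ps.
  - intros h h' Hh Hh'. rewrite <- (qpi_hom _ HNA h h'), !ps; auto.
    rewrite P2; auto. apply qpi_hom. apply HH; auto.
  - intros h h' Hh Hh' e. rewrite !ps in e; auto. apply qeq in e. apply qeq.
    intros l hl. apply (proj1 (proj2 (proj2 (C l)))); auto. apply e; auto.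
  - intros k Hk. destruct (P4 k Hk) as [h [Hh e]]. exists h. split; auto. rewrite ps, e; auto.
  - intros a ia h Hh e. apply qeq in e.
    destruct (L1 a ia I) as [l [hl nl]]. apply nl. exists h, (gmul (ginv h) a).
    split; auto. split.
    + apply sc_sym; auto. apply e. auto.
    + rewrite mulKr. reflexivity.
  - intros b ib k Hk e. apply qeq in e.
    destruct (L2 b ib I) as [l [hl nl]]. apply nl. exists k, (gmul (ginv k) b).
    split; auto. split.
    + apply sc_sym; auto. apply e. auto.
    + rewrite mulKr. reflexivity.
  - intros h h' ih ih' nh e. apply qeq in e.
    destruct (L3 (h, h')) as [l [hl nl]]. apply List.in_prod; auto. exact nh.
    apply nl. apply e. auto.
  - intros k k' ik ik' nk e. apply qeq in e.
    destruct (L4 (k, k')) as [l [hl nl]]. apply List.in_prod; auto. exact nk.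
    apply nl. apply e. auto.
Qed.

Record Dat (A B : group) := mkDat {
  dGA : group; dGB : group; dfA : A -> dGA; dfB : B -> dGB; dpsi : dGA -> dGB }.
Arguments dGA {A B}. Arguments dGB {A B}. Arguments dfA {A B}. Arguments dfB {A B}. Arguments dpsi {A B}.

Definition good {A B : group} (H : A -> Prop) (K : B -> Prop) (phi : A -> B)
  (as_ : list A) (bs : list B) (hs : list A) (ks : list B) (d : Dat A B) : Prop :=
  let fA := dfA d in let fB := dfB d in let psi := dpsi d in
       finite_group (dGA d) /\ finite_group (dGB d) /\
       group_hom fA /\ (forall y : dGA d, exists a, fA a = y) /\
       group_hom fB /\ (forall y : dGB d, exists b, fB b = y) /\
       (forall h, H h -> psi (fA h) = fB (phi h)) /\
       (forall h h', H h -> H h' ->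
          psi (gmul (fA h) (fA h')) = gmul (psi (fA h)) (psi (fA h'))) /\
       (forall h h', H h -> H h' -> psi (fA h) = psi (fA h') -> fA h = fA h') /\
       (forall k, K k -> exists h, H h /\ psi (fA h) = fB k) /\
       (forall a, In a as_ -> forall h, H h -> fA a <> fA h) /\
       (forall b, In b bs -> forall k, K k -> fB b <> fB k) /\
       (forall h h', In h hs -> In h' hs -> h <> h' -> fA h <> fA h') /\
       (forall k k', In k ks -> In k' ks -> k <> k' -> fB k <> fB k').

Definition okT {A B : group} (H : A -> Prop) (K : B -> Prop)
  (t : (list A * list B) * (list A * list B)) : Prop :=
  (forall a, In a (fst (fst t)) -> ~ H a) /\ (forall b, In b (snd (fst t)) -> ~ K b) /\
  (forall h, In h (fst (snd t)) -> H h) /\ (forall k, In k (snd (snd t)) -> K k).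

Definition LamT {A B : group} (H : A -> Prop) (K : B -> Prop) : Type :=
  {t : (list A * list B) * (list A * list B) | okT H K t}.

Lemma dir2 (A B : group) (H : A -> Prop) (K : B -> Prop)
  (phi : A -> B) (HH : subgroup H) (HK : subgroup K)
  (Hphi : subgroup_iso H K phi) :
  (forall (as_ : list A) (bs : list B) (hs : list A) (ks : list B),
     (forall a, In a as_ -> ~ H a) ->
     (forall b, In b bs -> ~ K b) ->
     (forall h, In h hs -> H h) ->
     (forall k, In k ks -> K k) ->
     exists (GA GB : group) (fA : A -> GA) (fB : B -> GB) (psi : GA -> GB),
       finite_group GA /\ finite_group GB /\
       group_hom fA /\ (forall y : GA, exists a, fA a = y) /\
       group_hom fB /\ (forall y : GB, exists b, fB b = y) /\
       (forall h, H h -> psi (fA h) = fB (phi h)) /\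
       (forall h h', H h -> H h' ->
          psi (gmul (fA h) (fA h')) = gmul (psi (fA h)) (psi (fA h'))) /\
       (forall h h', H h -> H h' -> psi (fA h) = psi (fA h') -> fA h = fA h') /\
       (forall k, K k -> exists h, H h /\ psi (fA h) = fB k) /\
       (forall a, In a as_ -> forall h, H h -> fA a <> fA h) /\
       (forall b, In b bs -> forall k, K k -> fB b <> fB k) /\
       (forall h h', In h hs -> In h' hs -> h <> h' -> fA h <> fA h') /\
       (forall k k', In k ks -> In k' ks -> k <> k' -> fB k <> fB k')) ->
  (exists (Lam : Type) (NA : Lam -> A -> Prop) (NB : Lam -> B -> Prop),
      H_filtration H NA /\ H_filtration K NB /\ compatible H K phi NA NB).
Proof.
  intro H2.
  pose (lists := fun l : LamT H K => proj1_sig l).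
  assert (Hex : forall l : LamT H K, exists d : Dat A B,
     good H K phi (fst (fst (lists l))) (snd (fst (lists l))) (fst (snd (lists l))) (snd (snd (lists l))) d).
  { intros [[[as_ bs] [hs ks]] [h1 [h2 [h3 h4]]]]. simpl in *.
    destruct (H2 as_ bs hs ks h1 h2 h3 h4) as (GA & GB & fA & fB & psi & P).
    exists (mkDat A B GA GB fA fB psi). exact P. }
  pose (dfun := fun l => proj1_sig (constructive_indefinite_description _ (Hex l))).
  assert (dg : forall l, good H K phi (fst (fst (lists l))) (snd (fst (lists l)))
                   (fst (snd (lists l))) (snd (snd (lists l))) (dfun l)).
  { intro l. exact (proj2_sig (constructive_indefinite_description _ (Hex l))). }
  clearbody dfun.
  exists (LamT H K), (fun l a => dfA (dfun l) a = gone), (fun l b => dfB (dfun l) b = gone).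
  destruct Hphi as [P1 [P2 [P3 P4]]].
  assert (okA : forall a, ~ H a -> okT H K (((a :: nil), nil), (nil, nil))).
  { intros a na. split; [|split; [|split]]; simpl; intros x hx; try contradiction.
    destruct hx as [<-|[]]; auto. }
  assert (okB : forall b, ~ K b -> okT H K ((nil, (b :: nil)), (nil, nil))).
  { intros b nb. split; [|split; [|split]]; simpl; intros x hx; try contradiction.
    destruct hx as [<-|[]]; auto. }
  assert (okHA : forall a, H a -> okT H K ((nil, nil), ((a :: gone :: nil), nil))).
  { intros a ha. split; [|split; [|split]]; simpl; intros x hx; try contradiction.
    destruct hx as [<-|[<-|[]]]; auto. apply HH. }
  assert (okKB : forall b, K b -> okT H K ((nil, nil), (nil, (b :: gone :: nil)))).
  { intros b hb. split; [|split; [|split]]; simpl; intros x hx; try contradiction.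
    destruct hx as [<-|[<-|[]]]; auto. apply HK. }
  split; [|split].
  - split; [split|].
    + intro l. destruct (dg l) as (g1 & g2 & g3 & g4 & _). split.
      * apply ker_normal; auto.
      * apply ker_fi; auto.
    + intros a ha. apply NNPP. intro na. destruct (classic (H a)) as [Ha|nHa].
      * destruct (dg (exist _ _ (okHA a Ha))) as (g1 & g2 & g3 & _ & _ & _ & _ & _ & _ & _ & _ & _ & g13 & _).
        simpl in g13. apply (g13 a gone); auto. rewrite ha, hom1; auto.
      * destruct (dg (exist _ _ (okA a nHa))) as (g1 & g2 & g3 & _ & _ & _ & _ & _ & _ & _ & g11 & _).
        simpl in g11. apply (g11 a (or_introl eq_refl) gone); auto. apply HH.
        rewrite ha, hom1; auto.
    + intro a. split.
      * intro h. apply NNPP. intro nHa.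
        set (L := exist _ _ (okA a nHa)).
        destruct (dg L) as (g1 & g2 & g3 & _ & _ & _ & _ & _ & _ & _ & g11 & _).
        simpl in g11. destruct (h L) as [x [n [hx [hn e]]]].
        apply (g11 a (or_introl eq_refl) x hx). simpl in hn. rewrite e, g3, hn, mul1r. reflexivity.
      * intros Ha l. exists a, gone. split; auto. split.
        -- apply hom1. apply (dg l).
        -- rewrite mul1r. reflexivity.
  - split; [split|].
    + intro l. destruct (dg l) as (g1 & g2 & g3 & g4 & g5 & g6 & _). split.
      * apply ker_normal; auto.
      * apply ker_fi; auto.
    + intros a ha. apply NNPP. intro na. destruct (classic (K a)) as [Ha|nHa].
      * destruct (dg (exist _ _ (okKB a Ha))) as (g1 & g2 & g3 & _ & g5 & _ & _ & _ & _ & _ & _ & _ & _ & g14).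
        simpl in g14. apply (g14 a gone); auto. rewrite ha, hom1; auto.
      * destruct (dg (exist _ _ (okB a nHa))) as (g1 & g2 & g3 & _ & g5 & _ & _ & _ & _ & _ & _ & g12 & _).
        simpl in g12. apply (g12 a (or_introl eq_refl) gone); auto. apply HK.
        rewrite ha, hom1; auto.
    + intro a. split.
      * intro h. apply NNPP. intro nHa.
        set (L := exist _ _ (okB a nHa)).
        destruct (dg L) as (g1 & g2 & g3 & _ & g5 & _ & _ & _ & _ & _ & _ & g12 & _).
        simpl in g12. destruct (h L) as [x [n [hx [hn e]]]].
        apply (g12 a (or_introl eq_refl) x hx). simpl in hn. rewrite e, g5, hn, mul1r. reflexivity.
      * intros Ha l. exists a, gone. split; auto. split.
        -- apply hom1. apply (dg l).
        -- rewrite mul1r. reflexivity.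
  - intro l. destruct (dg l) as (g1 & g2 & g3 & g4 & g5 & g6 & g7 & g8 & g9 & g10 & _).
    unfold same_coset. split; [|split; [|split]].
    + intros h h' Hh Hh' e. apply ker_sc in e; auto. apply ker_sc; auto.
      rewrite <- !g7; auto. rewrite e; reflexivity.
    + intros h h' Hh Hh'. rewrite P2; auto. rewrite gmulVl. apply hom1; auto.
    + intros h h' Hh Hh' e. apply ker_sc in e; auto. apply ker_sc; auto.
      apply g9; auto. rewrite !g7; auto.
    + intros k Hk. destruct (g10 k Hk) as [h [Hh e]]. exists h. split; auto.
      apply ker_sc; auto. rewrite <- g7; auto.
Qed.

Theorem proposition3p2 (A B : group) (H : A -> Prop) (K : B -> Prop)
  (phi : A -> B) (HH : subgroup H) (HK : subgroup K)
  (Hphi : subgroup_iso H K phi) :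
  (exists (Lam : Type) (NA : Lam -> A -> Prop) (NB : Lam -> B -> Prop),
      H_filtration H NA /\ H_filtration K NB /\ compatible H K phi NA NB)
  <->
  (forall (as_ : list A) (bs : list B) (hs : list A) (ks : list B),
     (forall a, In a as_ -> ~ H a) ->
     (forall b, In b bs -> ~ K b) ->
     (forall h, In h hs -> H h) ->
     (forall k, In k ks -> K k) ->
     exists (GA GB : group) (fA : A -> GA) (fB : B -> GB) (psi : GA -> GB),
       finite_group GA /\ finite_group GB /\
       group_hom fA /\ (forall y : GA, exists a, fA a = y) /\
       group_hom fB /\ (forall y : GB, exists b, fB b = y) /\
       (* f^A(h) |-> f^B(phi h) is a well-defined isomorphism f^A(H) -> f^B(K) *)
       (forall h, H h -> psi (fA h) = fB (phi h)) /\
       (forall h h', H h -> H h' ->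
          psi (gmul (fA h) (fA h')) = gmul (psi (fA h)) (psi (fA h'))) /\
       (forall h h', H h -> H h' -> psi (fA h) = psi (fA h') -> fA h = fA h') /\
       (forall k, K k -> exists h, H h /\ psi (fA h) = fB k) /\
       (forall a, In a as_ -> forall h, H h -> fA a <> fA h) /\
       (forall b, In b bs -> forall k, K k -> fB b <> fB k) /\
       (forall h h', In h hs -> In h' hs -> h <> h' -> fA h <> fA h') /\
       (forall k k', In k ks -> In k' ks -> k <> k' -> fB k <> fB k')).
Proof.
  split.
  - intros (Lam & NA & NB & FA & FB & C).
    exact (dir1 A B H K phi HH HK Hphi Lam NA NB FA FB C).
  - exact (dir2 A B H K phi HH HK Hphi).
Qed.
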